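(* In a symmetric instance with $k$ signals ($2\le k\le n$), for every $s\in[-\infty,0]$ and every $s$-Pareto point collection $\mathcal P$, there exists a symmetric, direct and persuasive signaling scheme $\varphi^*$ with $k$ signals such that $u_{\mathcal S}(\varphi^* )=u_{\mathcal S}(\mathcal P)$ (and $u_{\mathcal R}(\varphi^* )=u_{\mathcal R}(\mathcal P)$).
   Context: Model: a receiver chooses one of the actions $[n]$; each action $i$ has a type $\theta_i$; the state $\boldsymbol\theta$ is drawn from a commonly known distribution $q$ over a finite set of type vectors; each type $t$ has receiver value $\rho(t)$ and sender value $\xi(t)$. A direct scheme with $k$ signals maps each state to a distribution over $k$ signals, each recommending an action; it is persuasive if for every signal $\sigma$ sent with positive probability recommending $i$, $\mathbb E[\rho(\theta_i)\mid\sigma]\ge\mathbb E[\rho(\theta_j)\mid\sigma]$ for all $j$; $u_{\mathcal S},u_{\mathcal R}$ denote expected utilities when the receiver follows. $\rho_E=\max_i\sum_{\boldsymbol\theta}q_{\boldsymbol\theta}\rho(\theta_i)$. Symmetric instance: $q_{\boldsymbol\theta}=q_{\boldsymbol\theta'}$ whenever $\boldsymbol\theta'$ is a permutation of $\boldsymbol\theta$; types in a state are pairwise distinct. For a permutation $\pi$ of $[n]$ let $(\pi\cdot\boldsymbol\theta)_{\pi(l)}=\theta_l$. A symmetric scheme is a direct scheme whose signals recommend actions $1,\dots,k$ and with $\varphi(\pi\cdot\boldsymbol\theta,\pi(i))=\varphi(\boldsymbol\theta,i)$ for all states, all $i\in[k]$, and all permutations $\pi$ of $[n]$ with $\pi([k])=[k]$.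 Identify each type $c$ with the point $(\rho(c),\xi(c))$. For a $k$-set $C$ of types, $q_C=\Pr[\{\theta_1,\dots,\theta_k\}=C]$. For $s\in(-\infty,0]$, $p\in\mathrm{conv}(C)$ corresponds to slope $s$ if it maximizes $y-sx$ over $(x,y)\in\mathrm{conv}(C)$; it corresponds to slope $-\infty$ if it maximizes the first coordinate over $\mathrm{conv}(C)$. A point collection $\mathcal P$ assigns to each $C$ with $q_C>0$ a point $p(C)=(p_{\mathcal R}(C),p_{\mathcal S}(C))\in\mathrm{conv}(C)$; $u_{\mathcal S}(\mathcal P)=\sum_Cq_Cp_{\mathcal S}(C)$, $u_{\mathcal R}(\mathcal P)=\sum_Cq_Cp_{\mathcal R}(C)$. $\mathcal P$ is $s$-Pareto if every $p(C)$ corresponds to slope $s$ and $u_{\mathcal R}(\mathcal P)\ge\rho_E$. *)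

(* Defs.v *)
From HB Require Import structures.
From mathcomp Require Import all_boot all_order all_algebra all_fingroup.
From mathcomp Require Import reals.
Set Implicit Arguments. Unset Strict Implicit. Unset Printing Implicit Defensive.
Import Order.TTheory GRing.Theory Num.Theory.
Local Open Scope ring_scope.

Section Model.
Variables (R : realType) (T : finType) (n : nat).

(* a state: a type vector, one type per action *)
Notation state := {ffun 'I_n -> T}.

Definition is_distribution (q : state -> R) :=
  (forall th, 0 <= q th) /\ \sum_th q th = 1.

Definition perm_act (pi : {perm 'I_n}) (th : state) : state :=
  [ffun m => th (pi^-1%g m)].

Definition symmetric_instance (q : state -> R) :=
  (forall (pi : {perm 'I_n}) th, q (perm_act pi th) = q th) /\
  (forall th, 0 < q th -> injective th).

(* rho_E = max_i sum_th q th rho(th_i)  (max of a nonempty list; n >= 1) *)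
Definition rhoE (q : state -> R) (rho : T -> R) : R :=
  let s := [seq \sum_th q th * rho (th i) | i : 'I_n] in
  \big[Num.max/head 0 s]_(x <- s) x.

Variable k : nat.

(* A direct scheme with k signals: phi th sigma is the probability of sending
   signal sigma in state th; signal sigma recommends action rec sigma. *)
Definition direct_scheme (phi : state -> 'I_k -> R) :=
  forall th, (forall sg, 0 <= phi th sg) /\ \sum_sg phi th sg = 1.

Definition sig_prob (q : state -> R) (phi : state -> 'I_k -> R) (sg : 'I_k) : R :=
  \sum_th q th * phi th sg.

Definition cond_exp (q : state -> R) (phi : state -> 'I_k -> R) (sg : 'I_k)
  (f : state -> R) : R :=
  (\sum_th q th * phi th sg * f th) / sig_prob q phi sg.

Definition persuasive (q : state -> R) (rho : T -> R) (rec : 'I_k -> 'I_n)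
  (phi : state -> 'I_k -> R) :=
  forall sg, 0 < sig_prob q phi sg ->
    forall j : 'I_n,
      cond_exp q phi sg (fun th => rho (th j)) <=
      cond_exp q phi sg (fun th => rho (th (rec sg))).

Definition u_scheme (q : state -> R) (v : T -> R) (rec : 'I_k -> 'I_n)
  (phi : state -> 'I_k -> R) : R :=
  \sum_th q th * \sum_sg phi th sg * v (th (rec sg)).

Definition symmetric_scheme (rec : 'I_k -> 'I_n) (phi : state -> 'I_k -> R) :=
  (forall sg, nat_of_ord (rec sg) = nat_of_ord sg) /\
  (forall (pi : {perm 'I_n}),
     (forall l : 'I_n, (l < k)%N -> (pi l < k)%N) ->
     forall th (sg sg' : 'I_k), pi (rec sg) = rec sg' ->
       phi (perm_act pi th) sg' = phi th sg).

Definition first_types (th : state) : {set T} :=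
  th @: [set i : 'I_n | (i < k)%N].

Definition qC (q : state -> R) (C : {set T}) : R :=
  \sum_(th | first_types th == C) q th.

(* p in conv(C), types identified with points (rho c, xi c) *)
Definition in_conv (rho xi : T -> R) (C : {set T}) (p : R * R) :=
  exists lam : T -> R,
    [/\ forall c, 0 <= lam c,
        forall c, c \notin C -> lam c = 0,
        \sum_c lam c = 1 &
        p = (\sum_c lam c * rho c, \sum_c lam c * xi c)].

(* slopes in [-oo, 0]: None is -oo, Some s is s *)
Definition corresponds_to_slope (rho xi : T -> R) (C : {set T})
  (s : option R) (p : R * R) :=
  in_conv rho xi C p /\
  forall p', in_conv rho xi C p' ->
    match s with
    | Some s0 => p'.2 - s0 * p'.1 <= p.2 - s0 * p.1
    | None => p'.1 <= p.1
    end.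

(* a point collection assigns to each k-set C with q_C > 0 a point in conv(C);
   values on other sets are irrelevant *)
Definition point_collection (q : state -> R) (rho xi : T -> R)
  (P : {set T} -> R * R) :=
  forall C : {set T}, #|C| = k -> 0 < qC q C -> in_conv rho xi C (P C).

Definition uS_pc (q : state -> R) (P : {set T} -> R * R) : R :=
  \sum_(C : {set T} | #|C| == k) qC q C * (P C).2.

Definition uR_pc (q : state -> R) (P : {set T} -> R * R) : R :=
  \sum_(C : {set T} | #|C| == k) qC q C * (P C).1.

Definition s_Pareto (q : state -> R) (rho xi : T -> R) (s : option R)
  (P : {set T} -> R * R) :=
  point_collection q rho xi P /\
  (forall C : {set T}, #|C| = k -> 0 < qC q C ->
     corresponds_to_slope rho xi C s (P C)) /\
  rhoE q rho <= uR_pc q P.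

End Model.

(* Main.v *)
Require Import Defs.
From HB Require Import structures.
From mathcomp Require Import all_boot all_order all_algebra all_fingroup.
From mathcomp Require Import reals.
From Stdlib Require Import ClassicalEpsilon.
Import Order.TTheory GRing.Theory Num.Theory.
Local Open Scope ring_scope.
Set Implicit Arguments. Unset Strict Implicit. Unset Printing Implicit Defensive.

Section Helpers.
Variables (R : realType) (T : finType) (n k : nat) (Hkn : (k <= n)%N).

Definition recw (sg : 'I_k) : 'I_n := widen_ord Hkn sg.

Lemma recw_inj : injective recw.
Proof. by move=> a b /(congr1 val) /= /val_inj. Qed.

Lemma ft_recw (th : {ffun 'I_n -> T}) :
  first_types k th = [set th (recw sg) | sg : 'I_k].
Proof.
apply/setP=> c; apply/imsetP/imsetP => [[i]|[sg _ ->]].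
  rewrite inE => Hi ->; exists (Ordinal Hi) => //; congr (th _); exact: val_inj.
by exists (recw sg) => //; rewrite inE /= ltn_ord.
Qed.

Lemma sum_ft (th : {ffun 'I_n -> T}) (g : T -> R) :
  #|first_types k th| = k ->
  (forall c, c \notin first_types k th -> g c = 0) ->
  \sum_(sg : 'I_k) g (th (recw sg)) = \sum_c g c.
Proof.
move=> Hc Hg.
rewrite (bigID (fun c => c \in first_types k th)) /= [X in _ + X]big1; last first.
  by move=> c /Hg.
rewrite addr0 ft_recw big_imset //.
apply/imset_injP; move: Hc; rewrite ft_recw => ->.
by rewrite card_ord.
Qed.

Lemma card_ft_inj (th : {ffun 'I_n -> T}) : injective th -> #|first_types k th| = k.
Proof.
move=> Hi; rewrite ft_recw card_imset ?card_ord //.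
by move=> a b /Hi /recw_inj.
Qed.

Lemma perm_act_inj (pi : {perm 'I_n}) : injective (@perm_act T n pi).
Proof.
move=> a b H; apply/ffunP=> m.
have := congr1 (fun f : {ffun 'I_n -> T} => f (pi m)) H.
by rewrite /perm_act !ffunE permK.
Qed.

Lemma ft_perm (pi : {perm 'I_n}) (th : {ffun 'I_n -> T}) :
  (forall l : 'I_n, (l < k)%N -> (pi l < k)%N) ->
  first_types k (perm_act pi th) = first_types k th.
Proof.
move=> Hpi.
set K := [set i : 'I_n | (i < k)%N].
have piK : [set pi x | x in K] = K.
  apply/eqP; rewrite eqEcard card_imset; last exact: perm_inj.
  rewrite leqnn andbT; apply/subsetP=> x /imsetP [l]; rewrite !inE => Hl ->.
  exact: Hpi.
have piK' : [set (pi^-1)%g x | x in K] = K.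
  rewrite -{1}piK -imset_comp.
  by under eq_imset => x do rewrite /= permK; rewrite imset_id.
rewrite /first_types -/K.
rewrite (eq_imset _ (g := th \o (pi^-1)%g)); last first.
  by move=> m; rewrite /perm_act ffunE.
by rewrite imset_comp piK'.
Qed.

Lemma le_bigmax_seq' (s : seq R) x0 x : x \in s -> x <= \big[Num.max/x0]_(y <- s) y.
Proof.
elim: s => [//|y s IH]; rewrite in_cons big_cons => /orP [/eqP ->|/IH H].
  by rewrite le_max lexx.
by rewrite le_max H orbT.
Qed.

End Helpers.

Theorem lemma3p4 (R : realType) (T : finType) (n k : nat)
  (q : {ffun 'I_n -> T} -> R) (rho xi : T -> R) :
  is_distribution q -> symmetric_instance q ->
  (2 <= k)%N -> (k <= n)%N ->
  forall (s : option R), (forall s0, s = Some s0 -> s0 <= 0) ->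
  forall P : {set T} -> R * R, s_Pareto k q rho xi s P ->
  exists (rec : 'I_k -> 'I_n) (phi : {ffun 'I_n -> T} -> 'I_k -> R),
    [/\ symmetric_scheme rec phi, direct_scheme phi,
        persuasive q rho rec phi,
        u_scheme q xi rec phi = uS_pc k q P &
        u_scheme q rho rec phi = uR_pc k q P].
Proof.
move=> [q0 q1] [qsym qinj] k2 Hkn s Hs P [Hpc [_ HuR]].
have Hlam : forall C : {set T}, {lam : T -> R | #|C| = k -> 0 < qC k q C ->
   [/\ forall c, 0 <= lam c, forall c, c \notin C -> lam c = 0,
       \sum_c lam c = 1 &
       P C = (\sum_c lam c * rho c, \sum_c lam c * xi c)]}.
  move=> C; apply: constructive_indefinite_description.
  case: (boolP ((#|C| == k) && (0 < qC k q C))) => [/andP[/eqP H1 H2]|H].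
    by have [lam Hl] := Hpc C H1 H2; exists lam.
  by exists (fun _ => 0) => H1 H2; exfalso; move: H; rewrite H1 eqxx H2.
pose lam C := sval (Hlam C).
have lamP (C : {set T}) : #|C| = k -> 0 < qC k q C ->
   [/\ forall c, 0 <= lam C c, forall c, c \notin C -> lam C c = 0,
       \sum_c lam C c = 1 &
       P C = (\sum_c lam C c * rho c, \sum_c lam C c * xi c)].
  exact: (svalP (Hlam C)).
pose cond (th : {ffun 'I_n -> T}) :=
  (#|first_types k th| == k) && (0 < qC k q (first_types k th)).
pose phi (th : {ffun 'I_n -> T}) (sg : 'I_k) :=
  if cond th then lam (first_types k th) (th (recw Hkn sg)) else (k%:R)^-1.
have Hsum th (g : T -> R) : cond th ->
  \sum_sg phi th sg * g (th (recw Hkn sg)) =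
  \sum_c lam (first_types k th) c * g c.
  move=> Hc; rewrite /phi Hc.
  move: Hc => /andP [/eqP H1 H2]; have [_ Hz _ _] := lamP _ H1 H2.
  rewrite (sum_ft Hkn (g := fun c => lam (first_types k th) c * g c)) //.
  by move=> c /Hz ->; rewrite mul0r.
have Hcond th : 0 < q th -> cond th.
  move=> Hq; have Hc := card_ft_inj Hkn (qinj _ Hq).
  rewrite /cond Hc eqxx /= /qC (bigD1 th) //=.
  by rewrite ltr_wpDr // sumr_ge0.
have Hu (v : T -> R) (proj : R * R -> R) :
  (forall C : {set T}, #|C| = k -> 0 < qC k q C -> proj (P C) = \sum_c lam C c * v c) ->
  u_scheme q v (recw Hkn) phi =
    \sum_(C : {set T} | #|C| == k) qC k q C * proj (P C).
  move=> Hproj.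
  rewrite /u_scheme (eq_bigr (fun th => if #|first_types k th| == k
                then q th * proj (P (first_types k th)) else 0)); last first.
    move=> th _; have := q0 th; rewrite le0r => /orP [/eqP ->|Hq].
      by rewrite !mul0r; case: ifP.
    have Hc := Hcond _ Hq; rewrite Hsum //.
    move: Hc => /andP [H1 H2]; rewrite H1 Hproj //; exact/eqP.
  rewrite -big_mkcond /=.
  rewrite (partition_big (fun th => first_types k th) (fun C => #|C| == k)) //=.
  apply: eq_bigr => C HC; rewrite /qC big_distrl /=.
  apply: eq_big => [th|th /andP [_ /eqP ->] //].
  by case: (eqVneq (first_types k th) C) => [->|]; rewrite ?andbF ?andbT ?HC.
have HuRe : u_scheme q rho (recw Hkn) phi = uR_pc k q P.
  apply: Hu => C H1 H2; have [_ _ _ ->] := lamP _ H1 H2; done.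
have HuSe : u_scheme q xi (recw Hkn) phi = uS_pc k q P.
  apply: Hu => C H1 H2; have [_ _ _ ->] := lamP _ H1 H2; done.
have Hsymm : symmetric_scheme (recw Hkn) phi.
  split => [sg //|pi Hpi th sg sg' Hsg].
  have E : perm_act pi th (recw Hkn sg') = th (recw Hkn sg).
    by rewrite -Hsg /perm_act ffunE permK.
  by rewrite /phi /cond !ft_perm // E.
have Hdirect : direct_scheme phi.
  move=> th; split; [move=> sg|]; rewrite /phi; case Hc: (cond th).
  - move: Hc => /andP [/eqP H1 H2]; by have [H _ _ _] := lamP _ H1 H2.
  - by rewrite invr_ge0 ler0n.
  - move: (Hc) => /andP [/eqP H1 H2]; have [_ Hz H _] := lamP _ H1 H2.
    by rewrite (sum_ft Hkn (g := lam (first_types k th))).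
  - rewrite sumr_const card_ord -[_ *+ k]mulr_natl mulfV // pnatr_eq0 -lt0n.
    exact: leq_trans k2.
exists (recw Hkn), phi; split => //.
move=> sg Hsp j; rewrite /cond_exp; apply: ler_wpM2r; first by rewrite invr_ge0 ltW.
rewrite -subr_ge0 -sumrB.
pose D (a : 'I_k) := \sum_th (q th * phi th a * rho (th (recw Hkn a))
                               - q th * phi th a * rho (th j)).
change (0 <= D sg).
have Hzero a : j = recw Hkn a -> D a = 0.
  by move=> Hj; rewrite /D big1 // => th _; rewrite Hj subrr.
have Hsym a : recw Hkn a != j -> recw Hkn sg != j -> D a = D sg.
  move=> Ha Hsg; pose pi := tperm (recw Hkn a) (recw Hkn sg).
  have Hpi : forall l : 'I_n, (l < k)%N -> (pi l < k)%N.
    by move=> l Hl; rewrite /pi; case: tpermP => // _; rewrite /= ltn_ord.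
  rewrite /D (reindex_inj (perm_act_inj (pi:=pi))); apply: eq_bigr => th _.
  have [_ Hs2] := Hsymm.
  rewrite qsym (Hs2 pi Hpi th sg a); last by rewrite /pi tpermR.
  by rewrite /perm_act !ffunE /pi tpermV tpermL tpermD.
have Hsum3 : 0 <= \sum_a D a.
  rewrite /D exchange_big /=.
  rewrite (eq_bigr (fun th => q th * (\sum_a phi th a * rho (th (recw Hkn a)))
                               - q th * rho (th j))); last first.
    move=> th _; rewrite sumrB; congr (_ - _).
      by rewrite mulr_sumr; apply: eq_bigr => a _; rewrite mulrA.
    have [_ H1] := Hdirect th.
    by rewrite -mulr_suml -mulr_sumr H1 mulr1.
  rewrite sumrB subr_ge0.
  have -> : \sum_th q th * (\sum_a phi th a * rho (th (recw Hkn a))) =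
            u_scheme q rho (recw Hkn) phi by [].
  rewrite HuRe; apply: le_trans HuR.
  rewrite /rhoE; apply: le_bigmax_seq'.
  by apply: (map_f (fun i => \sum_th q th * rho (th i))); rewrite mem_enum.
case: (eqVneq (recw Hkn sg) j) => [Hj|Hj]; first by rewrite Hzero.
rewrite leNgt; apply/negP => Hneg.
have : \sum_a D a <= D sg.
  rewrite (bigD1 sg) //= -[leRHS]addr0 lerD2l; apply: sumr_le0 => a _.
  case: (eqVneq (recw Hkn a) j) => [Ha|Ha].
    by rewrite Hzero.
  by rewrite Hsym // ltW.
by move=> H; move: (le_lt_trans Hsum3 (le_lt_trans H Hneg)); rewrite ltxx.
Qed.
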